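(* Let $m,n\ge1$. For every instance $(Q,c,d)$ of BQAP1, the set $\mathcal{G}_1=\{(x,y)\text{ feasible for BQAP1}: f_1(x,y)\ge \mathcal{A}_1(Q,c,d)\}$ satisfies $|\mathcal{G}_1|\ge n^{m-1}m^{n-1}$. For every instance $(Q,c,d)$ of BQAP2, the set $\mathcal{G}_2=\{(x,y)\text{ feasible for BQAP2}: f_2(x,y)\ge \mathcal{A}_2(Q,c,d)\}$ satisfies $|\mathcal{G}_2|\ge m^{m-1}n^{n-1}$.
   Context: $M=\{1,\dots,m\}$, $N=\{1,\dots,n\}$. BQAP1: data $Q=(q_{ijk\ell})$ ($m\times n\times m\times n$ real array), real $m\times n$ matrices $c,d$; feasible solutions are pairs $(x,y)$ of $m\times n$ 0-1 matrices with $\sum_{j=1}^n x_{ij}=1$ for all $i\in M$ and $\sum_{i=1}^m y_{ij}=1$ for all $j\in N$; objective $f_1(x,y)=\sum_{i,k\in M}\sum_{j,\ell\in N} q_{ijk\ell}x_{ij}y_{k\ell}+\sum_{i\in M,j\in N}c_{ij}x_{ij}+\sum_{i\in M,j\in N}d_{ij}y_{ij}$. BQAP2: data $Q$ ($m\times m\times n\times n$ real array), real $m\times m$ matrix $c$, real $n\times n$ matrix $d$; feasible solutions are pairs $(x,y)$ with $x$ an $m\times m$ 0-1 matrix with $\sum_{j=1}^m x_{ij}=1$ for all $i\in M$ and $y$ an $n\times n$ 0-1 matrix with $\sum_{i=1}^n y_{ij}=1$ for all $j\in N$; objective $f_2(x,y)=\sum_{i,j\in M}\sum_{k,\ell\in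 N} q_{ijk\ell}x_{ij}y_{k\ell}+\sum_{i,j\in M}c_{ij}x_{ij}+\sum_{i,j\in N}d_{ij}y_{ij}$. $\mathcal{A}_1(Q,c,d)$ (resp. $\mathcal{A}_2(Q,c,d)$) denotes the arithmetic mean of $f_1$ (resp. $f_2$) over all feasible solutions of BQAP1 (resp. BQAP2). *)

(* Defs.v *)
From HB Require Import structures.
From mathcomp Require Import all_boot all_order all_algebra.
Set Implicit Arguments. Unset Strict Implicit. Unset Printing Implicit Defensive.
Import Order.TTheory GRing.Theory Num.Theory.
Local Open Scope ring_scope.

(* 0-1 entries are represented by booleans; b2R b is the real value 0 or 1. *)
Definition b2R (R : ringType) (b : bool) : R := (nat_of_bool b)%:R.

Definition feas1 (m n : nat) (p : 'M[bool]_(m, n) * 'M[bool]_(m, n)) : bool :=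
  [forall i : 'I_m, (\sum_(j < n) nat_of_bool (p.1 i j) == 1)%N] &&
  [forall j : 'I_n, (\sum_(i < m) nat_of_bool (p.2 i j) == 1)%N].

Definition f1 (R : ringType) (m n : nat) (Q : 'I_m -> 'I_n -> 'I_m -> 'I_n -> R)
  (c d : 'M[R]_(m, n)) (p : 'M[bool]_(m, n) * 'M[bool]_(m, n)) : R :=
  \sum_(i < m) \sum_(k < m) \sum_(j < n) \sum_(l < n)
      Q i j k l * b2R R (p.1 i j) * b2R R (p.2 k l)
  + \sum_(i < m) \sum_(j < n) c i j * b2R R (p.1 i j)
  + \sum_(i < m) \sum_(j < n) d i j * b2R R (p.2 i j).

Definition A1 (R : fieldType) (m n : nat) (Q : 'I_m -> 'I_n -> 'I_m -> 'I_n -> R)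
  (c d : 'M[R]_(m, n)) : R :=
  (\sum_(p | feas1 p) f1 Q c d p) / (#|[pred p | @feas1 m n p]|)%:R.

Definition G1 (R : realFieldType) (m n : nat) (Q : 'I_m -> 'I_n -> 'I_m -> 'I_n -> R)
  (c d : 'M[R]_(m, n)) : {set 'M[bool]_(m, n) * 'M[bool]_(m, n)} :=
  [set p | feas1 p && (A1 Q c d <= f1 Q c d p)].

Definition feas2 (m n : nat) (p : 'M[bool]_m * 'M[bool]_n) : bool :=
  [forall i : 'I_m, (\sum_(j < m) nat_of_bool (p.1 i j) == 1)%N] &&
  [forall j : 'I_n, (\sum_(i < n) nat_of_bool (p.2 i j) == 1)%N].

Definition f2 (R : ringType) (m n : nat) (Q : 'I_m -> 'I_m -> 'I_n -> 'I_n -> R)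
  (c : 'M[R]_m) (d : 'M[R]_n) (p : 'M[bool]_m * 'M[bool]_n) : R :=
  \sum_(i < m) \sum_(j < m) \sum_(k < n) \sum_(l < n)
      Q i j k l * b2R R (p.1 i j) * b2R R (p.2 k l)
  + \sum_(i < m) \sum_(j < m) c i j * b2R R (p.1 i j)
  + \sum_(i < n) \sum_(j < n) d i j * b2R R (p.2 i j).

Definition A2 (R : fieldType) (m n : nat) (Q : 'I_m -> 'I_m -> 'I_n -> 'I_n -> R)
  (c : 'M[R]_m) (d : 'M[R]_n) : R :=
  (\sum_(p | feas2 p) f2 Q c d p) / (#|[pred p | @feas2 m n p]|)%:R.

Definition G2 (R : realFieldType) (m n : nat) (Q : 'I_m -> 'I_m -> 'I_n -> 'I_n -> R)
  (c : 'M[R]_m) (d : 'M[R]_n) : {set 'M[bool]_m * 'M[bool]_n} :=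
  [set p | feas2 p && (A2 Q c d <= f2 Q c d p)].

(* Main.v *)
Require Import Defs.
From HB Require Import structures.
From mathcomp Require Import all_boot all_order all_algebra.
From mathcomp Require Import ring.
Import Order.TTheory GRing.Theory Num.Theory.
Set Implicit Arguments. Unset Strict Implicit. Unset Printing Implicit Defensive.
Local Open Scope ring_scope.

Definition feasG (p q r s : nat) (P : 'M[bool]_(p, q) * 'M[bool]_(r, s)) : bool :=
  [forall i : 'I_p, (\sum_(j < q) nat_of_bool (P.1 i j) == 1)%N] &&
  [forall j : 'I_s, (\sum_(i < r) nat_of_bool (P.2 i j) == 1)%N].

Definition fG (R : ringType) (p q r s : nat) (Q : 'I_p -> 'I_q -> 'I_r -> 'I_s -> R)
  (c : 'M[R]_(p, q)) (d : 'M[R]_(r, s)) (P : 'M[bool]_(p, q) * 'M[bool]_(r, s)) : R :=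
  \sum_(i < p) \sum_(j < q) \sum_(k < r) \sum_(l < s)
      Q i j k l * b2R R (P.1 i j) * b2R R (P.2 k l)
  + \sum_(i < p) \sum_(j < q) c i j * b2R R (P.1 i j)
  + \sum_(k < r) \sum_(l < s) d k l * b2R R (P.2 k l).

Lemma sum_shift (T : Type) (idx : T) (op : Monoid.com_law idx) n (j : 'I_n.+1) (F : 'I_n.+1 -> T) :
  \big[op/idx]_(a < n.+1) F (j - a) = \big[op/idx]_(a < n.+1) F a.
Proof. by rewrite [RHS](reindex_inj (subrI j)). Qed.

Lemma sum_shift2 (T : Type) (idx : T) (op : Monoid.com_law idx) n (j : 'I_n.+1) (F : 'I_n.+1 -> T) :
  \big[op/idx]_(a < n.+1) F (a - j) = \big[op/idx]_(a < n.+1) F a.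
Proof. by rewrite [RHS](reindex_inj (can_inj (addrNK j))). Qed.

Section Gen.
Variables (R : realFieldType) (p q' r' s : nat).
Local Notation q := q'.+1.
Local Notation r := r'.+1.
Local Notation T := ('M[bool]_(p, q) * 'M[bool]_(r, s))%type.

Definition sh (a : 'I_q) (b : 'I_r) (P : T) : T :=
  (\matrix_(i, j) P.1 i (j - a), \matrix_(k, l) P.2 (k - b) l).

Lemma sh_inj a b : injective (sh a b).
Proof.
move=> [x y] [x' y'] [] /matrixP Ex /matrixP Ey; congr pair; apply/matrixP.
  move=> i j; have := Ex i (j + a); by rewrite !mxE addrK.
move=> k l; have := Ey (k + b) l; by rewrite !mxE addrK.
Qed.

Lemma feas_sh a b P : feasG (sh a b P) = feasG P.
Proof.
rewrite /feasG /=.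
congr andb; apply: eq_forallb => i; congr (_ == _).
  under eq_bigr do rewrite mxE.
  exact: (sum_shift2 _ a (fun j => nat_of_bool (P.1 i j))).
under eq_bigr do rewrite mxE.
exact: (sum_shift2 _ b (fun k => nat_of_bool (P.2 k i))).
Qed.

Lemma b2R_sum n (F : 'I_n -> bool) : (\sum_j nat_of_bool (F j) == 1)%N ->
  \sum_j b2R R (F j) = 1.
Proof. by move=> /eqP H; rewrite /b2R -natr_sum H. Qed.

Lemma swap1 (I J K : finType) (F : I -> J -> K -> R) :
  \sum_a \sum_b \sum_i F a b i = \sum_i \sum_a \sum_b F a b i.
Proof.
under eq_bigr => a _ do rewrite exchange_big.
by rewrite exchange_big.
Qed.

Lemma swap1' (I K L : finType) (F : I -> K -> L -> R) :
  \sum_a \sum_i \sum_j F a i j = \sum_i \sum_j \sum_a F a i j.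
Proof.
rewrite exchange_big; apply: eq_bigr => i _; by rewrite exchange_big.
Qed.

Variables (Q : 'I_p -> 'I_q -> 'I_r -> 'I_s -> R) (c : 'M[R]_(p, q)) (d : 'M[R]_(r, s)).

Definition CC : R := \sum_(i < p) \sum_(j < q) \sum_(k < r) \sum_(l < s) Q i j k l
  + r%:R * \sum_(i < p) \sum_(j < q) c i j + q%:R * \sum_(k < r) \sum_(l < s) d k l.

Lemma orbit_sum P : feasG P -> \sum_a \sum_b fG Q c d (sh a b P) = CC.
Proof.
case/andP => /forallP Hx /forallP Hy.
have Sx i j : \sum_(a < q) b2R R (P.1 i (j - a)) = 1.
  rewrite (sum_shift _ j (fun a => b2R R (P.1 i a))); exact: b2R_sum.
have Sy k l : \sum_(b < r) b2R R (P.2 (k - b) l) = 1.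
  rewrite (sum_shift _ k (fun b => b2R R (P.2 b l))); exact: b2R_sum.
rewrite /fG /CC.
under eq_bigr => a _ do rewrite big_split /= big_split /=.
rewrite big_split /= big_split /=.
congr (_ + _ + _).
- etransitivity; first exact: swap1.
  apply: eq_bigr => i _; etransitivity; first exact: swap1.
  apply: eq_bigr => j _; etransitivity; first exact: swap1.
  apply: eq_bigr => k _; etransitivity; first exact: swap1.
  apply: eq_bigr => l _.
  transitivity (Q i j k l * ((\sum_(a < q) b2R R (P.1 i (j - a))) * (\sum_(b < r) b2R R (P.2 (k - b) l)))); last by rewrite Sx Sy !mulr1.
  rewrite big_distrlr mulr_sumr; apply: eq_bigr => a _; rewrite mulr_sumr; apply: eq_bigr => b _.
  by rewrite !mxE mulrA.
- under eq_bigr do rewrite sumr_const card_ord.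
  rewrite sumrMnl -[LHS]mulr_natl; congr (_ * _).
  rewrite swap1'; apply: eq_bigr => i _; apply: eq_bigr => j _.
  under eq_bigr do rewrite mxE.
  by rewrite -mulr_sumr Sx mulr1.
- rewrite sumr_const card_ord -[LHS]mulr_natl; congr (_ * _).
  rewrite swap1'; apply: eq_bigr => k _; apply: eq_bigr => l _.
  under eq_bigr do rewrite mxE.
  by rewrite -mulr_sumr Sy mulr1.
Qed.

Definition SumF : R := \sum_(P : T | feasG P) fG Q c d P.
Definition NN : nat := #|[pred P : T | feasG P]|.
Definition AA : R := SumF / NN%:R.
Definition GG : {set T} := [set P : T | feasG P && (AA <= fG Q c d P)].

Lemma total : (q * r)%:R * SumF = NN%:R * CC.
Proof.
have E a b : SumF = \sum_(P : T | feasG P) fG Q c d (sh a b P).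
  rewrite /SumF (reindex_inj (@sh_inj a b)) /=.
  by apply: eq_bigl => P; rewrite feas_sh.
transitivity (\sum_(a < q) \sum_(b < r) \sum_(P : T | feasG P) fG Q c d (sh a b P)).
  under eq_bigr => a _ do under eq_bigr => b _ do rewrite -E.
  by rewrite sumr_const card_ord sumr_const card_ord -mulrnA mulr_natl mulnC.
rewrite exchange_big /=.
under eq_bigr => a _ do rewrite exchange_big /=.
rewrite exchange_big /=.

under eq_bigr => P FP do rewrite exchange_big orbit_sum //.
by rewrite sumr_const mulr_natl.
Qed.

Lemma has_ord n : has predT (index_enum 'I_n.+1).
Proof. by apply/hasP; exists ord0; rewrite ?mem_index_enum. Qed.

Lemma exists_good P : feasG P -> [exists a, [exists b, AA <= fG Q c d (sh a b P)]].
Proof.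
move=> FP; apply: contraT; rewrite negb_exists => /forallP H.
have H' a b : fG Q c d (sh a b P) < AA.
  by have := H a; rewrite negb_exists => /forallP/(_ b); rewrite -ltNge.
have NP : (0 < NN)%N by apply/card_gt0P; exists P.
have Hlt : CC < \sum_(a < q) \sum_(b < r) AA.
  rewrite -(orbit_sum FP); apply: ltr_sum; first exact: has_ord.
  move=> a _; apply: ltr_sum; first exact: has_ord.
  by move=> b _; apply: H'.
move: Hlt; rewrite sumr_const card_ord sumr_const card_ord -mulrnA -mulr_natl mulnC.
have -> : (q * r)%:R * AA = CC.
  have hN : NN%:R != 0 :> R by rewrite pnatr_eq0 -lt0n.
  apply: (@mulfI _ NN%:R) => //.
  by rewrite -total /AA; field.

by rewrite ltxx.
Qed.

Lemma count_G : (NN <= q * r * #|GG|)%N.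
Proof.
rewrite /NN -(sum1_card [pred P : T | feasG P]).
apply: (@leq_trans (\sum_(P in [pred P : T | feasG P]) \sum_(a < q) \sum_(b < r) nat_of_bool (sh a b P \in GG))).
  apply: leq_sum => P; rewrite inE => FP.
  case/existsP: (exists_good FP) => a /existsP [b Hab].
  have Hin : sh a b P \in GG by rewrite inE feas_sh FP Hab.
  rewrite (bigD1 a) //= (bigD1 b) //= Hin.
  by rewrite -addnA leq_addr.
rewrite exchange_big /=.
under eq_bigr => a _ do rewrite exchange_big /=.
have E a b : \sum_(P in [pred P : T | feasG P]) nat_of_bool (sh a b P \in GG) = #|GG|.
  rewrite big_mkcond /=.
  transitivity (\sum_(P : T) nat_of_bool (sh a b P \in GG)).
    apply: eq_bigr => P _; case: ifP => // /negbT nF.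
    by move: nF; rewrite inE => /negbTE nF; rewrite inE feas_sh nF.
  rewrite [RHS](_ : _ = \sum_(P : T) nat_of_bool (P \in GG)).
    by rewrite [RHS](reindex_inj (@sh_inj a b)).
  by rewrite -sum1_card big_mkcond; apply: eq_bigr => P _; case: (P \in GG).
under eq_bigr => a _ do under eq_bigr => b _ do rewrite E.
by rewrite sum_nat_const card_ord sum_nat_const card_ord mulnA.
Qed.

Definition emb (u : {ffun 'I_p -> 'I_q} * {ffun 'I_s -> 'I_r}) : T :=
  (\matrix_(i, j) (u.1 i == j), \matrix_(k, l) (u.2 l == k)).

Lemma emb_inj : injective emb.
Proof.
move=> [f g] [f' g'] [] /matrixP Ex /matrixP Ey; congr pair; apply/ffunP.
  by move=> i; have := Ex i (f i); rewrite !mxE eqxx /= => /esym/eqP.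
by move=> l; have := Ey (g l) l; rewrite !mxE eqxx /= => /esym/eqP.
Qed.


Lemma emb_feas u : feasG (emb u).
Proof.
apply/andP; split; apply/forallP => i /=.
  rewrite (bigD1 (u.1 i)) //= mxE eqxx big1 // => j /negbTE nj.
  by rewrite mxE eq_sym nj.
rewrite (bigD1 (u.2 i)) //= mxE eqxx big1 // => j /negbTE nj.
by rewrite mxE eq_sym nj.
Qed.

Lemma count_S : (q ^ p * r ^ s <= NN)%N.
Proof.
have -> : (q ^ p * r ^ s = #|[set emb u | u in [set: {ffun 'I_p -> 'I_q} * {ffun 'I_s -> 'I_r}]]|)%N.
  by rewrite card_imset; [rewrite cardsT card_prod !card_ffun !card_ord | exact: emb_inj].
apply: subset_leq_card; apply/subsetP => _ /imsetP [u _ ->].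
by rewrite inE emb_feas.
Qed.

Lemma mainG : (q ^ p * r ^ s <= q * r * #|GG|)%N.
Proof. exact: leq_trans count_S count_G. Qed.

End Gen.

Theorem theorem2 (R : realFieldType) (m n : nat) (hm : (0 < m)%N) (hn : (0 < n)%N) :
  (forall (Q : 'I_m -> 'I_n -> 'I_m -> 'I_n -> R) (c d : 'M[R]_(m, n)),
      (n ^ m.-1 * m ^ n.-1 <= #|G1 Q c d|)%N) /\
  (forall (Q : 'I_m -> 'I_m -> 'I_n -> 'I_n -> R) (c : 'M[R]_m) (d : 'M[R]_n),
      (m ^ m.-1 * n ^ n.-1 <= #|G2 Q c d|)%N).
Proof.
case: m hm => // m' _; case: n hn => // n' _ /=.
split.
- move=> Q c d.
  have Ef P : f1 Q c d P = fG Q c d P.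
    rewrite /f1 /fG; congr (_ + _ + _); apply: eq_bigr => i _; exact: exchange_big.
  have EA : A1 Q c d = AA Q c d.
    rewrite /A1 /AA /SumF /NN; congr (_ / _); apply: eq_bigr => P _; exact: Ef.
  have -> : G1 Q c d = GG Q c d by apply/setP => P; rewrite !inE EA Ef.
  rewrite -(@leq_pmul2l (n'.+1 * m'.+1)) //.
  apply: leq_trans (mainG Q c d).
  by rewrite !expnS mulnACA.
- move=> Q c d.
  have -> : G2 Q c d = GG Q c d by apply/setP => P; rewrite !inE.
  rewrite -(@leq_pmul2l (m'.+1 * n'.+1)) //.
  apply: leq_trans (mainG Q c d).
  by rewrite !expnS mulnACA.
Qed.
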